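(* Let $\mathcal{C}$ be the smallest set of functions of finite arity on $[0,1]$ (i.e. functions $[0,1]^n\to[0,1]$, $n\in\mathbb{N}$) such that: (i) $\mathcal{C}$ contains all projections $p^n_i(x_0,\dots,x_{n-1})=x_i$ ($n\in\mathbb{N}$, $0\le i<n$); (ii) if $g\in\mathcal{C}$ is $n$-ary and $a\in[0,1]$, then $\chi_a(g)\colon \mathbf{x}\mapsto\chi_a(g(\mathbf{x}))$ belongs to $\mathcal{C}$; (iii) if $g_1,g_2\in\mathcal{C}$ are $n$-ary and $b\in[0,1[$, then $\mathbf{x}\mapsto \mathsf{Med}_b(g_1(\mathbf{x}),g_2(\mathbf{x}))$ belongs to $\mathcal{C}$; (iv) if $I$ is a nonempty set with $|I|\le\mathfrak{c}=2^{\aleph_0}$ and $g_i\in\mathcal{C}$, $i\in I$, are all $n$-ary, then the pointwise supremum $\mathbf{x}\mapsto\bigvee_{i\in I}g_i(\mathbf{x})$ belongs to $\mathcal{C}$. Then $\mathcal{C}=\mathsf{Agg}$, i.e. the set of all aggregation functions on $[0,1]$ is generated by the infinitary supremum operation $\bigvee$, the functions $\chi_a$, $a\in[0,1]$, and the $b$-medians $\mathsf{Med}_b$, $b\in[0,1[$.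
   Context: For $n\in\mathbb{N}$, an $n$-ary aggregation function on $[0,1]$ is a function $f\colon[0,1]^n\to[0,1]$ which is nondecreasing (not necessarily strictly) in each coordinate and satisfies $f(0,\dots,0)=0$ and $f(1,\dots,1)=1$. $\mathsf{Agg}^n$ denotes the set of all $n$-ary aggregation functions (for $n=1$ it is not restricted to the identity), and $\mathsf{Agg}=\bigcup_{n\in\mathbb{N}}\mathsf{Agg}^n$. For $a\in[0,1]$, $\chi_a\colon[0,1]\to[0,1]$ is defined by $\chi_a(x)=1$ if $x\ge a$ and $x\neq0$, and $\chi_a(x)=0$ if $x<a$ or $x=0$ (so $\chi_0$ is the characteristic function of $]0,1]$ and, for $a>0$, $\chi_a$ is the characteristic function of $[a,1]$). For $b\in[0,1]$, the $b$-median is $\mathsf{Med}_b(x,y)=\mathsf{Med}(x,y,b)$, the median of the three numbers $x,y,b$. *)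

(* Defs.v *)
From HB Require Import structures.
From mathcomp Require Import all_boot all_order all_algebra.
From mathcomp Require Import all_classical all_reals.
Set Implicit Arguments. Unset Strict Implicit. Unset Printing Implicit Defensive.
Import Order.TTheory GRing.Theory Num.Theory.
Local Open Scope ring_scope.
Local Open Scope classical_set_scope.

Definition I01 (R : realType) := {x : R | (0 <= x <= 1)}.

Definition fn (R : realType) (n : nat) := ('I_n -> I01 R) -> I01 R.

Definition chi (R : realType) (a x : R) : R :=
  if (a <= x) && (x != 0) then 1 else 0.

Definition med3 (R : realType) (x y z : R) : R :=
  Num.max (Num.min x y) (Num.min (Num.max x y) z).

Definition Medb (R : realType) (b x y : R) : R := med3 x y b.

Definition proj (R : realType) (n : nat) (i : 'I_n) : fn R n := fun x => x i.

Definition closed_clone (R : realType) (S : forall n, fn R n -> Prop) : Prop :=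
  (forall n (i : 'I_n), S n (proj i)) /\
  (forall n (g : fn R n) (a : R), 0 <= a <= 1 -> S n g ->
     forall h : fn R n, (forall x, val (h x) = chi a (val (g x))) -> S n h) /\
  (forall n (g1 g2 : fn R n) (b : R), 0 <= b < 1 -> S n g1 -> S n g2 ->
     forall h : fn R n,
       (forall x, val (h x) = Medb b (val (g1 x)) (val (g2 x))) -> S n h) /\
  (* (iv) pointwise supremum of a nonempty family of cardinality <= 2^aleph_0 *)
  (forall n (I : Type) (g : I -> fn R n),
     inhabited I ->
     (exists e : I -> (nat -> bool), injective e) ->
     (forall i, S n (g i)) ->
     forall h : fn R n,
       (forall x, val (h x) = sup [set val (g i x) | i in [set: I]]) -> S n h).

Definition clone_C (R : realType) (n : nat) (f : fn R n) : Prop :=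
  forall S : forall m, fn R m -> Prop, closed_clone S -> S n f.

Definition is_agg (R : realType) (n : nat) (f : fn R n) : Prop :=
  (forall (x y : 'I_n -> I01 R) (i : 'I_n),
     (forall j, j != i -> x j = y j) -> val (x i) <= val (y i) ->
     val (f x) <= val (f y)) /\
  (forall x : 'I_n -> I01 R, (forall i, val (x i) = 0) -> val (f x) = 0) /\
  (forall x : 'I_n -> I01 R, (forall i, val (x i) = 1) -> val (f x) = 1).

(* Main.v *)
Require Import Defs.
From mathcomp Require Import all_boot all_order all_algebra.
From mathcomp Require Import all_classical all_reals.
From mathcomp Require Import lra.
Set Implicit Arguments. Unset Strict Implicit. Unset Printing Implicit Defensive.
Import Order.TTheory GRing.Theory Num.Theory.
Local Open Scope ring_scope.
Local Open Scope classical_set_scope.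

Ltac no_mm t := lazymatch t with
  | context [Num.min _ _] => fail | context [Num.max _ _] => fail | _ => idtac end.
Ltac casesl := repeat match goal with
  | |- context [Num.min ?a ?b] => no_mm a; no_mm b; case: (leP a b) => ?
  | |- context [Num.max ?a ?b] => no_mm a; no_mm b; case: (leP a b) => ?
  end.

Lemma med3_01 (R : realType) (x y z : R) : 0 <= x <= 1 -> 0 <= y <= 1 -> 0 <= z <= 1 ->
  0 <= med3 x y z <= 1.
Proof.
rewrite /med3 => /andP[? ?] /andP[? ?] /andP[? ?].
casesl; apply/andP; split; lra.
Qed.

Lemma med3_min (R : realType) (x y : R) : 0 <= x -> 0 <= y -> med3 x y 0 = Num.min x y.
Proof. rewrite /med3 => ? ?; casesl; lra. Qed.

Lemma med3_00 (R : realType) (c : R) : 0 <= c -> med3 0 0 c = 0.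
Proof. rewrite /med3 => ?; casesl; lra. Qed.
Lemma med3_10 (R : realType) (c : R) : 0 <= c <= 1 -> med3 1 0 c = c.
Proof. rewrite /med3 => /andP[? ?]; casesl; lra. Qed.
Lemma med3_11 (R : realType) (c : R) : 0 <= c <= 1 -> med3 1 1 c = 1.
Proof. rewrite /med3 => /andP[? ?]; casesl; lra. Qed.
Lemma med3_mono (R : realType) (x y x' y' z : R) : x <= x' -> y <= y' ->
  med3 x y z <= med3 x' y' z.
Proof. rewrite /med3 => ? ?; casesl; lra. Qed.

Lemma chi01 (R : realType) (a v : R) : 0 <= chi a v <= 1.
Proof. rewrite /chi; case: ifP => _; apply/andP; split; lra. Qed.
Lemma chi_cases (R : realType) (a v : R) : chi a v = 0 \/ chi a v = 1.
Proof. rewrite /chi; case: ifP => _; auto. Qed.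
Lemma chi1E (R : realType) (a v : R) : chi a v = 1 -> a <= v /\ v != 0.
Proof. rewrite /chi; case: ifP => [/andP[h1 h2] _|_ /eqP]; [by [] | by rewrite eq_sym oner_eq0]. Qed.
Lemma chi_mono (R : realType) (a u v : R) : 0 <= u -> u <= v -> chi a u <= chi a v.
Proof.
move=> u0 uv; rewrite /chi; case: ifP => [/andP[au u0']|]; last by case: ifP => _; lra.
have -> : (a <= v) && (v != 0).
  apply/andP; split; first exact: le_trans uv.
  apply/eqP => v0. move: u0'; rewrite (_ : u = 0) ?eqxx //; apply/eqP; rewrite eq_le; apply/andP; split; lra.
done.
Qed.
Lemma chi_0 (R : realType) (a : R) : chi a 0 = 0.
Proof. by rewrite /chi eqxx andbF. Qed.
Lemma chi_1 (R : realType) (a : R) : a <= 1 -> chi a 1 = 1.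
Proof. by move=> h; rewrite /chi h oner_eq0. Qed.

Lemma clamp_proof (R : realType) (r : R) : 0 <= Num.min 1 (Num.max 0 r) <= 1.
Proof. casesl; apply/andP; split; lra. Qed.
Definition clamp (R : realType) (r : R) : I01 R := exist (fun x : R => 0 <= x <= 1) _ (clamp_proof r).
Lemma clampK (R : realType) (r : R) : 0 <= r <= 1 -> val (clamp r) = r.
Proof. move=> /andP[? ?]; rewrite /=; casesl; lra. Qed.

Lemma sup_eq_ub (R : realType) (E : set R) v : E v -> ubound E v -> sup E = v.
Proof.
move=> Ev ub; apply/eqP; rewrite eq_le; apply/andP; split.
  by apply: ge_sup => //; exists v.
by apply: ub_le_sup => //; exists v.
Qed.

Definition rng (R : realType) n (G : ('I_n -> I01 R) -> R) := forall x, 0 <= G x <= 1.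
Definition SS (R : realType) (S : forall m, fn R m -> Prop) n (G : ('I_n -> I01 R) -> R) :=
  S n (fun x => clamp (G x)).

Lemma S_ext (R : realType) S n (g h : fn R n) : closed_clone S -> S n g ->
  (forall x, val (h x) = val (g x)) -> S n h.
Proof.
case=> _ [_ [H3 _]] Sg e.
have h0 : 0 <= (0:R) < 1 by apply/andP; split; [exact: lexx | exact: ltr01].
apply: (H3 n g g 0 h0 Sg Sg).
move=> x; rewrite e /Medb med3_min; first by rewrite minxx.
  by case/andP: (valP (g x)).
by case/andP: (valP (g x)).
Qed.

Lemma SS_of (R : realType) S n (g : fn R n) G : closed_clone S -> S n g ->
  (forall x, val (g x) = G x) -> SS S G.
Proof.
move=> HS Sg e; rewrite /SS; apply: (S_ext HS Sg) => x.
have hx : 0 <= G x <= 1 by rewrite -e; exact: (valP (g x)).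
by rewrite clampK.
Qed.

Lemma of_SS (R : realType) S n (h : fn R n) G : closed_clone S -> SS S G -> rng G ->
  (forall x, val (h x) = G x) -> S n h.
Proof. by move=> HS SG rG e; apply: (S_ext HS SG) => x; rewrite e clampK. Qed.

Lemma SS_eq (R : realType) S n (G G' : ('I_n -> I01 R) -> R) : closed_clone S -> SS S G ->
  (forall x, G x = G' x) -> SS S G'.
Proof. by move=> HS SG e; rewrite /SS; apply: (S_ext HS SG) => x; rewrite e. Qed.

Lemma SS_proj (R : realType) S n (i : 'I_n) : closed_clone S -> SS S (fun x : 'I_n -> I01 R => val (x i)).
Proof. move=> HS; case: (HS) => H1 _; exact: (SS_of HS (H1 n i)). Qed.

Lemma rng_proj (R : realType) n (i : 'I_n) : rng (fun x : 'I_n -> I01 R => val (x i)).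
Proof. move=> x; exact: (valP (x i)). Qed.

Lemma SS_chi (R : realType) S n (G : ('I_n -> I01 R) -> R) a : closed_clone S ->
  0 <= a <= 1 -> SS S G -> rng G -> SS S (fun x => chi a (G x)).
Proof.
move=> HS ha SG rG; case: (HS) => _ [H2 _]; rewrite /SS.
apply: (H2 n _ a ha SG) => x; rewrite !clampK //; exact: chi01.
Qed.

Lemma rng_chi (R : realType) n (G : ('I_n -> I01 R) -> R) a : rng (fun x => chi a (G x)).
Proof. move=> x; exact: chi01. Qed.

Lemma rng_med (R : realType) n (G1 G2 : ('I_n -> I01 R) -> R) b : 0 <= b <= 1 ->
  rng G1 -> rng G2 -> rng (fun x => Medb b (G1 x) (G2 x)).
Proof. move=> hb r1 r2 x; exact: med3_01. Qed.

Lemma SS_med (R : realType) S n (G1 G2 : ('I_n -> I01 R) -> R) b : closed_clone S ->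
  0 <= b < 1 -> SS S G1 -> SS S G2 -> rng G1 -> rng G2 ->
  SS S (fun x => Medb b (G1 x) (G2 x)).
Proof.
move=> HS hb S1 S2 r1 r2; case: (HS) => _ [_ [H3 _]]; rewrite /SS.
apply: (H3 n _ _ b hb S1 S2) => x; rewrite !clampK //.
apply: rng_med => //; case/andP: hb => ? ?; apply/andP; split => //; exact: ltW.
Qed.

Lemma SS_bigmin (R : realType) S n k (F : 'I_k.+1 -> ('I_n -> I01 R) -> R) :
  closed_clone S -> (forall i, SS S (F i)) -> (forall i, rng (F i)) ->
  SS S (fun x => \big[Num.min/1]_(i < k.+1) F i x) /\
  rng (fun x => \big[Num.min/1]_(i < k.+1) F i x).
Proof.
move=> HS; elim: k F => [|k IH] F SF rF.
  have e : forall x, F ord0 x = \big[Num.min/1]_(i < 1) F i x.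
    move=> x; rewrite big_ord_recl big_ord0; have /andP[_ h] := rF ord0 x.
    by rewrite (min_idPl h).
  split; first exact: (SS_eq HS (SF ord0) e).
  by move=> x; rewrite -e; exact: rF.
have [S1 r1] := IH (fun i => F (lift ord0 i)) (fun i => SF _) (fun i => rF _).
have e : forall x, Medb 0 (F ord0 x) (\big[Num.min/1]_(i < k.+1) F (lift ord0 i) x)
   = \big[Num.min/1]_(i < k.+2) F i x.
  move=> x; have /andP[a1 _] := rF ord0 x; have /andP[a2 _] := r1 x.
  by rewrite [in RHS]big_ord_recl /Medb med3_min.
have h0 : 0 <= (0:R) < 1 by apply/andP; split; [exact: lexx | exact: ltr01].
have h0' : 0 <= (0:R) <= 1 by apply/andP; split; [exact: lexx | exact: ler01].
split; first exact: (SS_eq HS (SS_med HS h0 (SF ord0) S1 (rF ord0) r1) e).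
move=> x; rewrite -e; exact: (rng_med h0' (rF ord0) r1).
Qed.

Lemma bigmin01 (R : realType) k (F : 'I_k -> R) : (forall i, F i = 0 \/ F i = 1) ->
  \big[Num.min/1]_i F i = 0 \/ \big[Num.min/1]_i F i = 1.
Proof.
move=> h; apply: (big_ind (fun v : R => v = 0 \/ v = 1)); first by right.
  move=> a b [->|->] [->|->]; rewrite ?minxx ?(min_idPl ler01) ?(min_idPr ler01); auto.
by move=> i _; exact: h.
Qed.

Lemma bigmin_all1 (R : realType) k (F : 'I_k -> R) : (forall i, F i = 1) ->
  \big[Num.min/1]_i F i = 1.
Proof.
move=> h; apply: (big_ind (fun v : R => v = 1)).
- by [].
- by move=> a b -> ->; rewrite minxx.
- by move=> i _; exact: h.
Qed.

Lemma bigmin_1 (R : realType) k (F : 'I_k -> R) j : (forall i, F i = 0 \/ F i = 1) ->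
  \big[Num.min/1]_i F i = 1 -> F j = 1.
Proof.
move=> h e; have := bigmin_le 1 j F; rewrite e; case: (h j) => // ->.
by rewrite ler10.
Qed.

Lemma agg_mono (R : realType) n (f : fn R n) : is_agg f ->
  forall x y, (forall i, val (y i) <= val (x i)) -> val (f y) <= val (f x).
Proof.
case=> mono _ x y le.
pose z (m : nat) := fun i : 'I_n => if (i < m)%N then x i else y i.
have step : forall m, val (f (z m)) <= val (f (z m.+1)).
  move=> m; case: (ltnP m n) => [lt|ge].
    apply: (mono _ _ (Ordinal lt)).
      move=> j hj; rewrite /z.
      have hjm : (nat_of_ord j == m) = false.
        by apply/eqP => e; move/eqP: hj; apply; apply: val_inj.
      by rewrite [(_ < m.+1)%N]ltnS [(j <= m)%N]leq_eqVlt hjm.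
    by rewrite /z /= ltnn ltnSn; exact: le.
  have -> : z m = z m.+1.
    apply: funext => i; rewrite /z (leq_trans (ltn_ord i) ge).
    by rewrite (leq_trans (ltn_ord i) (leqW ge)).
  exact: lexx.
have chain : forall m, val (f (z 0%N)) <= val (f (z m)).
  by elim=> [|m IH]; [exact: lexx | exact: le_trans IH (step m)].
have z0 : z 0%N = y by apply: funext => i; rewrite /z ltn0.
have zn : z n = x by apply: funext => i; rewrite /z ltn_ord.
by have := chain n; rewrite z0 zn.
Qed.

Lemma agg_closed (R : realType) : closed_clone (fun m (g : fn R m) => is_agg g).
Proof.
split.
  move=> m i; split; [|split].
  - move=> x y j hj hle; rewrite /Defs.proj /=; case: (eqVneq i j) => [->|ne] //.
    by rewrite hj.
  - by move=> x h; exact: h.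
  - by move=> x h; exact: h.
split.
  move=> m g a ha [mono [z o]] h e; split; [|split].
  - move=> x y j hj hle; rewrite !e; apply: chi_mono; first by case/andP: (valP (g x)).
    exact: mono hj hle.
  - by move=> x hx; rewrite e z // chi_0.
  - by move=> x hx; rewrite e o // chi_1 //; case/andP: ha.
split.
  move=> m g1 g2 b hb [m1 [z1 o1]] [m2 [z2 o2]] h e; split; [|split].
  - move=> x y j hj hle; rewrite !e /Medb; apply: med3_mono.
      exact: m1 hj hle.
    exact: m2 hj hle.
  - by move=> x hx; rewrite e /Medb z1 // z2 // med3_00 //; case/andP: hb.
  - move=> x hx; rewrite e /Medb o1 // o2 // med3_11 //.
    by case/andP: hb => ? ?; apply/andP; split => //; exact: ltW.
move=> m I g [i0] _ Hg h e; split; [|split].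
- move=> x y j hj hle; rewrite !e; apply: ge_sup.
    by exists (val (g i0 x)); exists i0.
  move=> v [i _ <-]; apply: le_trans ((Hg i).1 x y j hj hle) _.
  apply: ub_le_sup; last by exists i.
  by exists 1; move=> w [i' _ <-]; case/andP: (valP (g i' y)).
- move=> x hx; rewrite e; apply: sup_eq_ub.
    by exists i0 => //; rewrite (Hg i0).2.1.
  by move=> v [i _ <-]; rewrite ((Hg i).2.1 x hx).
- move=> x hx; rewrite e; apply: sup_eq_ub.
    by exists i0 => //; rewrite (Hg i0).2.2.
  by move=> v [i _ <-]; rewrite ((Hg i).2.2 x hx).
Qed.

Definition enc (R : realType) k (y : 'I_k.+1 -> I01 R) (m : nat) : bool :=
  if @unpickle rat (m %/ k.+1) is Some q
  then ratr q < val (y (Ordinal (ltn_pmod m (ltn0Sn k)))) else false.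

Lemma enc_lt (R : realType) k (y z : 'I_k.+1 -> I01 R) i :
  val (y i) < val (z i) -> enc y = enc z -> False.
Proof.
move=> lt e; have [q] := rat_in_itvoo lt; rewrite in_itv /= => /andP[q1 q2].
have := congr1 (fun e => e (pickle q * k.+1 + i)%N) e; rewrite /enc.
have hm : ((pickle q * k.+1 + i) %/ k.+1 = pickle q)%N.
  by rewrite divnMDl // divn_small // addn0.
have ho : Ordinal (ltn_pmod (pickle q * k.+1 + i) (ltn0Sn k)) = i.
  by apply: val_inj; rewrite /= modnMDl modn_small.
rewrite hm pickleK ho q2 => h.
by have := lt_trans q1 h; rewrite ltxx.
Qed.

Lemma enc_inj (R : realType) k : injective (@enc R k).
Proof.
move=> y z e; apply: funext => i; apply: val_inj.
case: (ltgtP (val (y i)) (val (z i))) => // h; exfalso.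
  exact: enc_lt h e.
exact: enc_lt h (esym e).
Qed.

Definition Tf (R : realType) k (x : 'I_k.+1 -> I01 R) : R :=
  \big[Num.min/1]_(i < k.+1) chi 1 (val (x i)).
Definition i0f (R : realType) k (y : 'I_k.+1 -> I01 R) : 'I_k.+1 :=
  odflt ord0 [pick i | 0 < val (y i)].
Definition jj (R : realType) k (y : 'I_k.+1 -> I01 R) (i : 'I_k.+1) : 'I_k.+1 :=
  if 0 < val (y i) then i else i0f y.
Definition Uf (R : realType) k (y x : 'I_k.+1 -> I01 R) : R :=
  \big[Num.min/1]_(i < k.+1) chi (val (y (jj y i))) (val (x (jj y i))).
Definition Gf (R : realType) k (f : fn R k.+1) (y x : 'I_k.+1 -> I01 R) : R :=
  if val (f y) < 1 then Medb (val (f y)) (Uf y x) (Tf x) else Uf y x.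

Lemma Tf01 (R : realType) k (x : 'I_k.+1 -> I01 R) : Tf x = 0 \/ Tf x = 1.
Proof. apply: bigmin01 => i; exact: chi_cases. Qed.
Lemma Uf01 (R : realType) k (y x : 'I_k.+1 -> I01 R) : Uf y x = 0 \/ Uf y x = 1.
Proof. apply: bigmin01 => i; exact: chi_cases. Qed.

Lemma Tf1 (R : realType) k (x : 'I_k.+1 -> I01 R) : Tf x = 1 -> forall i, val (x i) = 1.
Proof.
move=> h i; have := bigmin_1 i (fun i => chi_cases _ _) h => /chi1E [h1 _].
case/andP: (valP (x i)) => _ h2; apply/eqP; rewrite eq_le h1 h2 //.
Qed.

Lemma Tf_top (R : realType) k (x : 'I_k.+1 -> I01 R) : (forall i, val (x i) = 1) -> Tf x = 1.
Proof. move=> h; apply: bigmin_all1 => i; rewrite h chi_1 //. Qed.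

Lemma Uf1 (R : realType) k (y x : 'I_k.+1 -> I01 R) : Uf y x = 1 ->
  forall i, val (y i) <= val (x i).
Proof.
move=> h i; case: (ltP 0 (val (y i))) => [pos|npos].
  have := bigmin_1 i (fun i => chi_cases _ _) h; rewrite /jj pos => /chi1E [].
  by [].
apply: le_trans npos _; by case/andP: (valP (x i)).
Qed.

Lemma Uf_self (R : realType) k (x : 'I_k.+1 -> I01 R) : (exists i, 0 < val (x i)) ->
  Uf x x = 1.
Proof.
move=> [i0 h0]; apply: bigmin_all1 => i.
have pos : 0 < val (x (jj x i)).
  rewrite /jj; case: ifP => // _; rewrite /i0f; case: pickP => [j hj|none] //=.
  by have := none i0; rewrite h0.
by rewrite /chi lexx gt_eqF.
Qed.

Lemma rng_Tf (R : realType) k : rng (@Tf R k).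
Proof. move=> x; case: (Tf01 x) => ->; apply/andP; split; lra. Qed.
Lemma rng_Uf (R : realType) k (y : 'I_k.+1 -> I01 R) : rng (Uf y).
Proof. move=> x; case: (Uf01 y x) => ->; apply/andP; split; lra. Qed.
Lemma rng_Gf (R : realType) k (f : fn R k.+1) y : rng (Gf f y).
Proof.
move=> x; rewrite /Gf; case: ifP => _; last exact: rng_Uf.
apply: med3_01; [exact: rng_Uf | exact: rng_Tf | exact: (valP (f y))].
Qed.

Lemma Gf_le (R : realType) k (f : fn R k.+1) y x : is_agg f -> Gf f y x <= val (f x).
Proof.
move=> Ha; have mono := agg_mono Ha.
have /andP[f0 f1] : 0 <= val (f x) <= 1 by exact: (valP (f x)).
have /andP[fy0 fy1] : 0 <= val (f y) <= 1 by exact: (valP (f y)).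
rewrite /Gf; case: ifP => hc.
  have [T0|T1] := Tf01 x.
    have [U0|U1] := Uf01 y x.
      by rewrite U0 T0 /Medb med3_00.
    by rewrite U1 T0 /Medb med3_10 ?fy0 ?fy1 //; apply: mono; exact: Uf1.
  have -> : val (f x) = 1 by apply: Ha.2.2; exact: Tf1.
  have /andP[_ ->] // : 0 <= Medb (val (f y)) (Uf y x) (Tf x) <= 1.
  apply: med3_01; [exact: rng_Uf | exact: rng_Tf | exact: (valP (f y))].
have [U0|U1] := Uf01 y x; first by rewrite U0.
rewrite U1; apply: le_trans (mono _ _ (Uf1 U1)).
by rewrite leNgt hc.
Qed.

Lemma Gf_self (R : realType) k (f : fn R k.+1) x : is_agg f -> Gf f x x = val (f x).
Proof.
move=> Ha.
have /andP[f0 f1] : 0 <= val (f x) <= 1 by exact: (valP (f x)).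
case: (boolP [exists i, 0 < val (x i)]) => [/existsP ex | nex].
  have U1 := Uf_self ex.
  rewrite /Gf; case: ifP => hc.
    have [T0|T1] := Tf01 x.
      by rewrite U1 T0 /Medb med3_10 ?f0 ?f1.
    by move: hc; rewrite (Ha.2.2 _ (Tf1 T1)) ltxx.
  rewrite U1; apply/eqP; rewrite eq_le f1 /=.
  by rewrite leNgt hc.
have x0 : forall i, val (x i) = 0.
  move=> i; move/existsPn: nex => /(_ i) h.
  case/andP: (valP (x i)) => h0 _; apply/eqP; rewrite eq_le h0 andbT leNgt.
  exact: h.
have fx0 : val (f x) = 0 by exact: Ha.2.1.
have T0 : Tf x = 0.
  case: (Tf01 x) => // /Tf1 /(_ ord0); rewrite x0 => /eqP; rewrite eq_sym oner_eq0.
  by [].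
have /andP[u0 _] := rng_Uf x x.
by rewrite /Gf fx0 ltr01 T0 /Medb med3_min // (min_idPr u0).
Qed.

Lemma SS_Tf (R : realType) S k : closed_clone S -> SS S (@Tf R k).
Proof.
move=> HS.
have h1 : 0 <= (1:R) <= 1 by apply/andP; split; [exact: ler01 | exact: lexx].
pose F := fun (i : 'I_k.+1) (x : 'I_k.+1 -> I01 R) => chi 1 (val (x i)).
have SF : forall i, SS S (F i).
  move=> i; exact: (SS_chi HS h1 (SS_proj i HS) (@rng_proj R _ i)).
have rF : forall i, rng (F i) by move=> i x; exact: chi01.
exact: (SS_bigmin HS SF rF).1.
Qed.

Lemma SS_Uf (R : realType) S k (y : 'I_k.+1 -> I01 R) : closed_clone S -> SS S (Uf y).
Proof.
move=> HS.
have ha : forall i, 0 <= val (y (jj y i)) <= 1 by move=> i; exact: (valP (y (jj y i))).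
pose F := fun (i : 'I_k.+1) (x : 'I_k.+1 -> I01 R) => chi (val (y (jj y i))) (val (x (jj y i))).
have SF : forall i, SS S (F i).
  move=> i; exact: (SS_chi HS (ha i) (SS_proj (jj y i) HS) (@rng_proj R _ _)).
have rF : forall i, rng (F i) by move=> i x; exact: chi01.
exact: (SS_bigmin HS SF rF).1.
Qed.

Lemma SS_Gf (R : realType) S k (f : fn R k.+1) y : closed_clone S -> SS S (Gf f y).
Proof.
move=> HS; case: (boolP (val (f y) < 1)) => hc; last first.
  apply: (SS_eq HS (SS_Uf y HS)) => x; rewrite /Gf (negbTE hc) //.
apply: (SS_eq (G := fun x => Medb (val (f y)) (Uf y x) (Tf x)) HS); last by move=> x; rewrite /Gf hc.
have hb : 0 <= val (f y) < 1 by apply/andP; split; [by case/andP: (valP (f y)) | exact: hc].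
have := SS_med HS hb (SS_Uf y HS) (@SS_Tf R S k HS) (rng_Uf y) (@rng_Tf R k). exact.
Qed.

Unset Implicit Arguments.
Theorem theorem1 (R : realType) (n : nat) (f : fn R n) :
  clone_C f <-> is_agg f.
Proof.
split; first by move=> Hc; exact: (Hc _ (@agg_closed R)).
move=> Ha S HS; case: n f Ha => [|k] f Ha.
  exfalso; case: Ha => _ [H0 H1].
  have hv : forall i : 'I_0, False by move=> [m]; rewrite ltn0.
  pose x0 : 'I_0 -> I01 R := fun _ => clamp 0.
  have e0 := H0 x0 (fun i => False_ind _ (hv i)).
  have e1 := H1 x0 (fun i => False_ind _ (hv i)).
  by move: e1; rewrite e0 => /eqP; rewrite eq_sym oner_eq0.
case: (HS) => _ [_ [_ H4]].
apply: (H4 k.+1 ('I_k.+1 -> I01 R) (fun y x => clamp (Gf f y x))).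
- by constructor; exact: (fun _ => clamp 0).
- by exists (@enc R k); exact: enc_inj.
- by move=> y; exact: SS_Gf.
- move=> x; apply/esym/sup_eq_ub.
    exists x => //; rewrite clampK; first exact: Gf_self.
    exact: (@rng_Gf R k f x x).
  move=> v [y _ <-]; rewrite clampK; last exact: (@rng_Gf R k f y x).
  exact: Gf_le.
Qed.
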